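(* Let $n\ge3$ and let $W$ be a real $2$-plane in $\mathbb{H}^n$ which is not contained in a quaternion line. Then the orbit $\mathbb{G}\equiv\mathrm{Sp}(n)\cdot\mathrm{Sp}(1)\cdot W$ has the transitivity property.
   Context: $\mathbb{H}^n=\mathbb{R}^{4n}$; $\mathrm{Sp}(n)$ acts by quaternion-linear isometries and $\mathrm{Sp}(1)$ by unit quaternion scalar multiplication. A set $\mathbb{G}$ of real planes has the transitivity property if for any two vectors $x,y\in\mathbb{H}^n$ there exist $W_1,\dots,W_k\in\mathbb{G}$ with $x\in W_1$, $y\in W_k$ and $\dim_{\mathbb{R}}(W_i\cap W_{i+1})>0$ for $i=1,\dots,k-1$. *)

(* Defs.v *)
(* H^n is modelled as 'M[R]_(n,4): row i is the i-th
   quaternion coordinate (a0,a1,a2,a3) = a0 + a1 i + a2 j + a3 k. *)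
From HB Require Import structures.
From mathcomp Require Import all_boot all_order all_algebra.
From mathcomp Require Import reals.
Set Implicit Arguments. Unset Strict Implicit. Unset Printing Implicit Defensive.
Import Order.TTheory GRing.Theory Num.Theory.
Local Open Scope ring_scope.

Section Quat.
Variable R : realType.

Definition qc (a : 'rV[R]_4) (k : nat) : R := a 0 (inord k).

Definition qmul (a b : 'rV[R]_4) : 'rV[R]_4 :=
  \row_(j < 4)
    match val j with
    | 0 => qc a 0 * qc b 0 - qc a 1 * qc b 1 - qc a 2 * qc b 2 - qc a 3 * qc b 3
    | 1 => qc a 0 * qc b 1 + qc a 1 * qc b 0 + qc a 2 * qc b 3 - qc a 3 * qc b 2
    | 2 => qc a 0 * qc b 2 - qc a 1 * qc b 3 + qc a 2 * qc b 0 + qc a 3 * qc b 1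
    | _ => qc a 0 * qc b 3 + qc a 1 * qc b 2 - qc a 2 * qc b 1 + qc a 3 * qc b 0
    end.

Definition rsc n (x : 'M[R]_(n, 4)) (q : 'rV[R]_4) : 'M[R]_(n, 4) :=
  \matrix_(i, j) (qmul (row i x) q) 0 j.

Definition sqnorm n (x : 'M[R]_(n, 4)) : R := \sum_i \sum_j x i j ^+ 2.

(* Sp(n): quaternion-linear (commuting with right scalar multiplication)
   additive maps preserving the Euclidean norm *)
Definition is_Sp n (A : 'M[R]_(n, 4) -> 'M[R]_(n, 4)) : Prop :=
  (forall x y, A (x + y) = A x + A y) /\
  (forall x q, A (rsc x q) = rsc (A x) q) /\
  (forall x, sqnorm (A x) = sqnorm x).

Definition real_plane n (W : {vspace 'M[R]_(n, 4)}) : Prop := \dim W = 2%N.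

Definition in_quat_line n (W : {vspace 'M[R]_(n, 4)}) : Prop :=
  exists u : 'M[R]_(n, 4), u != 0 /\
    forall w, w \in W -> exists q : 'rV[R]_4, w = rsc u q.

Definition in_SpSp1_orbit n (W W' : {vspace 'M[R]_(n, 4)}) : Prop :=
  exists (A : 'M[R]_(n, 4) -> 'M[R]_(n, 4)) (q : 'rV[R]_4),
    is_Sp A /\ sqnorm q = 1 /\
    forall v, v \in W' <-> exists2 w, w \in W & v = A (rsc w q).

Definition transitivity_property n (G : {vspace 'M[R]_(n, 4)} -> Prop) : Prop :=
  forall x y : 'M[R]_(n, 4),
    exists (k : nat) (Ws : nat -> {vspace 'M[R]_(n, 4)}),
      (forall i, (i <= k)%N -> G (Ws i)) /\
      x \in Ws 0%N /\ y \in Ws k /\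
      (forall i, (i < k)%N -> (0 < \dim (Ws i :&: Ws i.+1)%VS)%N).

End Quat.

(* Main.v *)
Require Import Defs.
From HB Require Import structures.
From mathcomp Require Import all_boot all_order all_algebra.
From mathcomp Require Import reals ring lra zify.
Set Implicit Arguments. Unset Strict Implicit. Unset Printing Implicit Defensive.
Import Order.TTheory GRing.Theory Num.Theory.
Local Open Scope ring_scope.

Section QuatAlg.
Variable R : realType.

Definition quat := 'rV[R]_4.
HB.instance Definition _ := GRing.Lmodule.on quat.

Definition qone : quat := \row_(j < 4) (if val j == 0%N then 1 else 0).

Lemma qext (a b : 'rV[R]_4) : qc a 0 = qc b 0 -> qc a 1 = qc b 1 ->
  qc a 2 = qc b 2 -> qc a 3 = qc b 3 -> a = b.
Proof.
move=> h0 h1 h2 h3; apply/rowP => j.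
have -> : j = inord (val j) by rewrite inord_val.
case: j => [[|[|[|[|k]]]] hk] //=.
Qed.

Lemma qm0 (a b : 'rV[R]_4) : qc (qmul a b) 0 =
  qc a 0 * qc b 0 - qc a 1 * qc b 1 - qc a 2 * qc b 2 - qc a 3 * qc b 3.
Proof. by rewrite {1}/qc mxE /= inordK. Qed.
Lemma qm1 (a b : 'rV[R]_4) : qc (qmul a b) 1 =
  qc a 0 * qc b 1 + qc a 1 * qc b 0 + qc a 2 * qc b 3 - qc a 3 * qc b 2.
Proof. by rewrite {1}/qc mxE /= inordK. Qed.
Lemma qm2 (a b : 'rV[R]_4) : qc (qmul a b) 2 =
  qc a 0 * qc b 2 - qc a 1 * qc b 3 + qc a 2 * qc b 0 + qc a 3 * qc b 1.
Proof. by rewrite {1}/qc mxE /= inordK. Qed.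
Lemma qm3 (a b : 'rV[R]_4) : qc (qmul a b) 3 =
  qc a 0 * qc b 3 + qc a 1 * qc b 2 - qc a 2 * qc b 1 + qc a 3 * qc b 0.
Proof. by rewrite {1}/qc mxE /= inordK. Qed.

Lemma qcD (a b : 'rV[R]_4) k : qc (a + b) k = qc a k + qc b k.
Proof. by rewrite /qc mxE. Qed.
Lemma qcN (a : 'rV[R]_4) k : qc (- a) k = - qc a k.
Proof. by rewrite /qc mxE. Qed.
Lemma qcB (a b : 'rV[R]_4) k : qc (a - b) k = qc a k - qc b k.
Proof. by rewrite qcD qcN. Qed.
Lemma qcZ c (a : 'rV[R]_4) k : qc (c *: a) k = c * qc a k.
Proof. by rewrite /qc mxE. Qed.
Lemma qc0 k : qc (0 : 'rV[R]_4) k = 0.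
Proof. by rewrite /qc mxE. Qed.
Lemma qone0 : qc qone 0 = 1. Proof. by rewrite /qc mxE /= inordK. Qed.
Lemma qone1 : qc qone 1 = 0. Proof. by rewrite /qc mxE /= inordK. Qed.
Lemma qone2 : qc qone 2 = 0. Proof. by rewrite /qc mxE /= inordK. Qed.
Lemma qone3 : qc qone 3 = 0. Proof. by rewrite /qc mxE /= inordK. Qed.

Ltac qs := apply: qext; rewrite ?(qm0,qm1,qm2,qm3,qcD,qcN,qcB,qcZ,qc0,qone0,qone1,qone2,qone3); ring.

Lemma qmulA : associative (@qmul R).
Proof. by move=> a b c; qs. Qed.
Lemma qmul1 : left_id qone (@qmul R).
Proof. by move=> a; qs. Qed.
Lemma qmulr1 : right_id qone (@qmul R).
Proof. by move=> a; qs. Qed.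
Lemma qmulDl : left_distributive (@qmul R) +%R.
Proof. by move=> a b c; qs. Qed.
Lemma qmulDr : right_distributive (@qmul R) +%R.
Proof. by move=> a b c; qs. Qed.
Lemma qone_neq0 : qone != 0 :> quat.
Proof. by apply/eqP => /(congr1 (fun a => qc a 0)); rewrite qone0 qc0; apply/eqP; rewrite oner_eq0. Qed.

HB.instance Definition _ := GRing.Zmodule_isNzRing.Build quat qmulA qmul1 qmulr1 qmulDl qmulDr qone_neq0.

Lemma qscalAl (c : R) (u v : quat) : c *: (u * v) = (c *: u) * v.
Proof. rewrite /GRing.mul /=. qs. Qed.
HB.instance Definition _ := GRing.Lmodule_isLalgebra.Build R quat qscalAl.
Lemma qscalAr (c : R) (u v : quat) : c *: (u * v) = u * (c *: v).
Proof. rewrite /GRing.mul /=. qs. Qed.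
HB.instance Definition _ := GRing.Lalgebra_isAlgebra.Build R quat qscalAr.


Lemma qmulE (a b : quat) : a * b = qmul a b. Proof. by []. Qed.
Lemma qoneE : (1 : quat) = qone. Proof. by []. Qed.

Ltac qs2 := rewrite ?qmulE ?qoneE; qs.

Definition qconj (a : quat) : quat := locked ((qc a 0 *+ 2) *: qone - a).
Definition qRe (a : quat) : R := qc a 0.
Definition qn (a : quat) : R := qc a 0 ^+ 2 + qc a 1 ^+ 2 + qc a 2 ^+ 2 + qc a 3 ^+ 2.

Lemma qcc0 a : qc (qconj a) 0 = qc a 0.
Proof. rewrite /qconj -lock qcB qcZ qone0; ring. Qed.
Lemma qcc1 a : qc (qconj a) 1 = - qc a 1.
Proof. rewrite /qconj -lock qcB qcZ qone1; ring. Qed.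
Lemma qcc2 a : qc (qconj a) 2 = - qc a 2.
Proof. rewrite /qconj -lock qcB qcZ qone2; ring. Qed.
Lemma qcc3 a : qc (qconj a) 3 = - qc a 3.
Proof. rewrite /qconj -lock qcB qcZ qone3; ring. Qed.

Lemma qcA0 (c : R) : qc (c%:A : quat) 0 = c.
Proof. rewrite qcZ qoneE qone0; ring. Qed.
Lemma qcA1 (c : R) : qc (c%:A : quat) 1 = 0.
Proof. rewrite qcZ qoneE qone1; ring. Qed.
Lemma qcA2 (c : R) : qc (c%:A : quat) 2 = 0.
Proof. rewrite qcZ qoneE qone2; ring. Qed.
Lemma qcA3 (c : R) : qc (c%:A : quat) 3 = 0.
Proof. rewrite qcZ qoneE qone3; ring. Qed.

Ltac qs3 := apply: qext; rewrite ?qmulE ?qoneE ?(qm0,qm1,qm2,qm3,qcD,qcN,qcB,qcZ,qc0,qone0,qone1,qone2,qone3,qcc0,qcc1,qcc2,qcc3,qcA0,qcA1,qcA2,qcA3); ring.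

Lemma qconjM (a b : quat) : qconj (a * b) = qconj b * qconj a.
Proof. qs3. Qed.
Lemma qconjD (a b : quat) : qconj (a + b) = qconj a + qconj b.
Proof. qs3. Qed.
Lemma qconjN (a : quat) : qconj (- a) = - qconj a.
Proof. qs3. Qed.
Lemma qconjZ c (a : quat) : qconj (c *: a) = c *: qconj a.
Proof. qs3. Qed.
Lemma qconjK (a : quat) : qconj (qconj a) = a.
Proof. qs3. Qed.
Lemma qconj0 : qconj 0 = 0.
Proof. qs3. Qed.
Lemma qconjA c : qconj (c%:A) = c%:A.
Proof. qs3. Qed.
Lemma qmulc (a : quat) : a * qconj a = (qn a)%:A.
Proof. rewrite /qn; qs3. Qed.
Lemma qcmul (a : quat) : qconj a * a = (qn a)%:A.
Proof. rewrite /qn; qs3. Qed.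
Lemma qReD a b : qRe (a + b) = qRe a + qRe b.
Proof. by rewrite /qRe qcD. Qed.
Lemma qReN a : qRe (- a) = - qRe a.
Proof. by rewrite /qRe qcN. Qed.
Lemma qReB a b : qRe (a - b) = qRe a - qRe b.
Proof. by rewrite /qRe qcB. Qed.
Lemma qReZ c a : qRe (c *: a) = c * qRe a.
Proof. by rewrite /qRe qcZ. Qed.
Lemma qReA c : qRe (c%:A) = c.
Proof. by rewrite /qRe qcA0. Qed.
Lemma qRe0 : qRe 0 = 0.
Proof. by rewrite /qRe qc0. Qed.
Lemma qReC (a b : quat) : qRe (a * b) = qRe (b * a).
Proof. rewrite /qRe !qmulE !qm0; ring. Qed.
Lemma qRe_conj a : qRe (qconj a) = qRe a.
Proof. by rewrite /qRe qcc0. Qed.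
Lemma qnM (a b : quat) : qn (a * b) = qn a * qn b.
Proof. rewrite /qn !qmulE qm0 qm1 qm2 qm3; ring. Qed.
Lemma qn_conj a : qn (qconj a) = qn a.
Proof. rewrite /qn qcc0 qcc1 qcc2 qcc3; ring. Qed.
Lemma qnZ c a : qn (c *: a) = c ^+ 2 * qn a.
Proof. rewrite /qn !qcZ; ring. Qed.
Lemma qnA c : qn (c%:A) = c ^+ 2.
Proof. rewrite /qn qcA0 qcA1 qcA2 qcA3; ring. Qed.
Lemma qn_ge0 a : 0 <= qn a.
Proof. rewrite /qn; nra. Qed.
Lemma qRe2_le a : qRe a ^+ 2 <= qn a.
Proof. rewrite /qn /qRe; nra. Qed.
Lemma qn_eq0 a : qn a = 0 -> a = 0.
Proof.
rewrite /qn => h.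
have h0 : qc a 0 = 0 by nra.
have h1 : qc a 1 = 0 by nra.
have h2 : qc a 2 = 0 by nra.
have h3 : qc a 3 = 0 by nra.
by apply: qext; rewrite qc0.
Qed.
Lemma qalgC c (a : quat) : c%:A * a = a * c%:A.
Proof. qs3. Qed.
Lemma qalgM c (a : quat) : a * c%:A = c *: a.
Proof. qs3. Qed.
Lemma qalgMl c (a : quat) : c%:A * a = c *: a.
Proof. qs3. Qed.

Lemma qRe_det (h : quat) : (forall p, qRe (h * p) = 0) -> h = 0.
Proof.
move=> H; apply: qn_eq0; rewrite -(qReA (qn h)) -qmulc; exact: H.
Qed.

End QuatAlg.


Section Hn.
Variable R : realType.
Variable n : nat.
Local Notation V := 'M[R]_(n, 4).
Local Notation quat := (quat R).
Implicit Types (x y u v w : V) (p q : quat) (c : R).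

Definition rowq (x : V) i : quat := row i x.
Definition herm (u v : V) : quat := \sum_i qconj (rowq u i) * rowq v i.

Lemma mat_ext (x y : V) : (forall i, rowq x i = rowq y i) -> x = y.
Proof. by move=> h; apply/row_matrixP => i; exact: h. Qed.
Lemma rowqD x y i : rowq (x + y) i = rowq x i + rowq y i.
Proof. by apply/rowP => j; rewrite /rowq !mxE. Qed.
Lemma rowqN x i : rowq (- x) i = - rowq x i.
Proof. by apply/rowP => j; rewrite /rowq !mxE. Qed.
Lemma rowqB x y i : rowq (x - y) i = rowq x i - rowq y i.
Proof. by apply/rowP => j; rewrite /rowq !mxE. Qed.
Lemma rowqZ c x i : rowq (c *: x) i = c *: rowq x i.
Proof. by apply/rowP => j; rewrite /rowq !mxE. Qed.
Lemma rowq0 i : rowq 0 i = 0.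
Proof. by apply/rowP => j; rewrite /rowq !mxE. Qed.
Lemma rowq_rsc x q i : rowq (rsc x q) i = rowq x i * q.
Proof. by apply/rowP => j; rewrite /rowq /rsc !mxE. Qed.

Lemma sum4 (F : 'I_4 -> R) : \sum_(j < 4) F j = F (inord 0) + F (inord 1) + F (inord 2) + F (inord 3).
Proof.
rewrite !big_ord_recl big_ord0 addr0 !addrA.
by congr (_ + _ + _ + _); congr F; apply/val_inj; rewrite /= inordK.
Qed.

Lemma sqnormE x : sqnorm x = \sum_i qn (rowq x i).
Proof.
rewrite /sqnorm; apply: eq_bigr => i _; rewrite sum4 /qn /qc /rowq !mxE.
by [].
Qed.

Lemma rscD x y q : rsc (x + y) q = rsc x q + rsc y q.
Proof. by apply: mat_ext => i; rewrite !(rowqD, rowq_rsc) mulrDl. Qed.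
Lemma rscN x q : rsc (- x) q = - rsc x q.
Proof. by apply: mat_ext => i; rewrite !(rowqN, rowq_rsc) mulNr. Qed.
Lemma rscB x y q : rsc (x - y) q = rsc x q - rsc y q.
Proof. by rewrite rscD rscN. Qed.
Lemma rscZ c x q : rsc (c *: x) q = c *: rsc x q.
Proof. by apply: mat_ext => i; rewrite !(rowqZ, rowq_rsc) scalerAl. Qed.
Lemma rscDq x p q : rsc x (p + q) = rsc x p + rsc x q.
Proof. by apply: mat_ext => i; rewrite !(rowqD, rowq_rsc) mulrDr. Qed.
Lemma rscNq x q : rsc x (- q) = - rsc x q.
Proof. by apply: mat_ext => i; rewrite !(rowqN, rowq_rsc) mulrN. Qed.
Lemma rscZq c x q : rsc x (c *: q) = c *: rsc x q.
Proof. by apply: mat_ext => i; rewrite !(rowqZ, rowq_rsc) scalerAr. Qed.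
Lemma rscM x p q : rsc (rsc x p) q = rsc x (p * q).
Proof. by apply: mat_ext => i; rewrite !rowq_rsc mulrA. Qed.
Lemma rsc1 x : rsc x (1 : quat) = x.
Proof. by apply: mat_ext => i; rewrite !rowq_rsc mulr1. Qed.
Lemma rscA x c : rsc x (c%:A : quat) = c *: x.
Proof. by apply: mat_ext => i; rewrite !(rowqZ, rowq_rsc) qalgM. Qed.
Lemma rsc0q x : rsc x (0 : quat) = 0.
Proof. by apply: mat_ext => i; rewrite !(rowq0, rowq_rsc) mulr0. Qed.
Lemma rsc0 q : rsc (0 : V) q = 0.
Proof. by apply: mat_ext => i; rewrite !(rowq0, rowq_rsc) mul0r. Qed.

Lemma hermDr u v w : herm u (v + w) = herm u v + herm u w.
Proof. by rewrite /herm -big_split; apply: eq_bigr => i _; rewrite rowqD mulrDr. Qed.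
Lemma hermDl u v w : herm (u + v) w = herm u w + herm v w.
Proof. by rewrite /herm -big_split; apply: eq_bigr => i _; rewrite rowqD qconjD mulrDl. Qed.
Lemma hermNr u v : herm u (- v) = - herm u v.
Proof. by rewrite /herm -sumrN; apply: eq_bigr => i _; rewrite rowqN mulrN. Qed.
Lemma hermNl u v : herm (- u) v = - herm u v.
Proof. by rewrite /herm -sumrN; apply: eq_bigr => i _; rewrite rowqN qconjN mulNr. Qed.
Lemma hermBr u v w : herm u (v - w) = herm u v - herm u w.
Proof. by rewrite hermDr hermNr. Qed.
Lemma hermBl u v w : herm (u - v) w = herm u w - herm v w.
Proof. by rewrite hermDl hermNl. Qed.
Lemma hermZr c u v : herm u (c *: v) = c *: herm u v.
Proof. by rewrite /herm scaler_sumr; apply: eq_bigr => i _; rewrite rowqZ scalerAr. Qed.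
Lemma hermZl c u v : herm (c *: u) v = c *: herm u v.
Proof. by rewrite /herm scaler_sumr; apply: eq_bigr => i _; rewrite rowqZ qconjZ scalerAl. Qed.
Lemma herm0r u : herm u 0 = 0.
Proof. by rewrite /herm big1 // => i _; rewrite rowq0 mulr0. Qed.
Lemma herm0l u : herm 0 u = 0.
Proof. by rewrite /herm big1 // => i _; rewrite rowq0 qconj0 mul0r. Qed.
Lemma herm_rscr u v q : herm u (rsc v q) = herm u v * q.
Proof. by rewrite /herm mulr_suml; apply: eq_bigr => i _; rewrite rowq_rsc mulrA. Qed.
Lemma herm_rscl u v q : herm (rsc u q) v = qconj q * herm u v.
Proof. by rewrite /herm mulr_sumr; apply: eq_bigr => i _; rewrite rowq_rsc qconjM mulrA. Qed.
Lemma herm_sym u v : herm v u = qconj (herm u v).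
Proof.
rewrite /herm; elim/big_rec2: _ => [|i y1 y2 _ ->]; first by rewrite qconj0.
by rewrite qconjD qconjM qconjK.
Qed.
Lemma herm_self u : herm u u = (sqnorm u)%:A.
Proof.
rewrite sqnormE /herm scaler_suml; apply: eq_bigr => i _; exact: qcmul.
Qed.
Lemma sqnorm_ge0 u : 0 <= sqnorm u.
Proof. by rewrite sqnormE; apply: sumr_ge0 => i _; exact: qn_ge0. Qed.
Lemma sqnorm_eq0 u : sqnorm u = 0 -> u = 0.
Proof.
rewrite sqnormE => /eqP; rewrite psumr_eq0 => [/allP h|i _]; last exact: qn_ge0.
apply: mat_ext => i; rewrite rowq0; apply: qn_eq0; apply/eqP; apply: h.
by rewrite mem_index_enum.
Qed.
Lemma sqnorm_herm u : sqnorm u = qRe (herm u u).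
Proof. by rewrite herm_self qReA. Qed.
Lemma sqnormD u v : sqnorm (u + v) = sqnorm u + sqnorm v + 2 * qRe (herm u v).
Proof.
rewrite !sqnorm_herm hermDl !hermDr (herm_sym u v) !qReD qRe_conj; ring.
Qed.
Lemma sqnormN u : sqnorm (- u) = sqnorm u.
Proof. by rewrite !sqnorm_herm hermNl hermNr opprK. Qed.
Lemma sqnormB u v : sqnorm (u - v) = sqnorm u + sqnorm v - 2 * qRe (herm u v).
Proof. by rewrite sqnormD sqnormN hermNr qReN; ring. Qed.
Lemma sqnormZ c u : sqnorm (c *: u) = c ^+ 2 * sqnorm u.
Proof. by rewrite !sqnorm_herm hermZl hermZr !qReZ; ring. Qed.
Lemma sqnorm_rsc u q : sqnorm (rsc u q) = sqnorm u * qn q.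
Proof.
rewrite !sqnorm_herm herm_rscl herm_rscr herm_self qalgMl -scalerAr qcmul.
by rewrite qReZ !qReA.
Qed.

End Hn.


Section Sp.
Variable R : realType.
Variable n : nat.
Local Notation V := 'M[R]_(n, 4).
Local Notation quat := (quat R).
Implicit Types (x y u v w z : V) (p q : quat) (c : R) (A : V -> V).

Lemma Sp_id : is_Sp (@id V).
Proof. by []. Qed.

Lemma Sp_comp A B : is_Sp A -> is_Sp B -> is_Sp (A \o B).
Proof.
move=> [A1 [A2 A3]] [B1 [B2 B3]]; split; [|split] => /=.
- by move=> x y; rewrite B1 A1.
- by move=> x q; rewrite B2 A2.
- by move=> x; rewrite A3 B3.
Qed.

Lemma Sp0 A : is_Sp A -> A 0 = 0.
Proof.
move=> [A1 _]; have h := A1 0 0; rewrite addr0 in h.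
by apply: (addrI (A 0)); rewrite addr0 -h.
Qed.

Lemma SpN A x : is_Sp A -> A (- x) = - A x.
Proof.
move=> hA; have h := hA.1 x (- x); rewrite subrr Sp0 // in h.
by apply/eqP; rewrite -addr_eq0 addrC -h.
Qed.

Lemma SpB A x y : is_Sp A -> A (x - y) = A x - A y.
Proof. by move=> hA; rewrite hA.1 SpN. Qed.

Lemma SpZ A c x : is_Sp A -> A (c *: x) = c *: A x.
Proof. by move=> hA; rewrite -(rscA x) -(rscA (A x)) hA.2.1. Qed.

Lemma Sp_herm A u v : is_Sp A -> herm (A u) (A v) = herm u v.
Proof.
move=> hA.
have hRe : forall u v, qRe (herm (A u) (A v)) = qRe (herm u v).
  move=> u' v'; have := hA.2.2 (u' + v'); rewrite hA.1 !sqnormD !hA.2.2; lra.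
apply/eqP; rewrite -subr_eq0; apply/eqP; apply: qRe_det => p.
rewrite mulrBl -!herm_rscr -hA.2.1 qReB hRe; lra.
Qed.

Definition refl (u : V) (b : quat) (v : V) : V := v - rsc u (b * herm u v).

Lemma refl_Sp u b : sqnorm u * qn b = 2 * qRe b -> is_Sp (refl u b).
Proof.
move=> hb; split; [|split] => /=.
- move=> x y; rewrite /refl hermDr mulrDr rscDq opprD addrACA //.
- by move=> x q; rewrite /refl herm_rscr rscB rscM mulrA.
- move=> x; rewrite /refl sqnormB sqnorm_rsc herm_rscr (herm_sym u x).
  rewrite qReC -mulrA qmulc qalgM qReZ qnM.
  have -> : sqnorm u * (qn b * qn (herm u x)) = (2 * qRe b) * qn (herm u x).
    by rewrite mulrA hb.
  ring.
Qed.

Lemma refl_exists (p w : V) : sqnorm p = sqnorm w ->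
  exists g, is_Sp g /\ g p = w /\ forall z, herm (p - w) z = 0 -> g z = z.
Proof.
move=> hpw.
have [<-|hne] := eqVneq p w; first by exists id; split => //.
set u := p - w.
have hu0 : 0 < sqnorm u.
  rewrite lt_def sqnorm_ge0 andbT; apply/eqP => /sqnorm_eq0 /eqP.
  by rewrite subr_eq0; apply/negP.
set g0 := herm u p.
have hRe : 2 * qRe g0 = sqnorm u.
  rewrite /g0 /u hermBl qReB (herm_sym p w) qRe_conj -sqnorm_herm sqnormB; lra.
have hn0 : 0 < qn g0 by have := qRe2_le g0; nra.
set b := (qn g0)^-1 *: qconj g0.
have hbg : b * g0 = 1.
  rewrite /b -scalerAl qcmul scalerA mulVf ?gt_eqF // scale1r.
  by [].
exists (refl u b); split; [|split].
- apply: refl_Sp; rewrite /b qnZ qn_conj qReZ qRe_conj.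
  rewrite -hRe; field; rewrite gt_eqF //.
- by rewrite /refl -/g0 hbg rsc1 /u opprB addrC subrK.
- by move=> z hz; rewrite /refl hz mulr0 rsc0q subr0.
Qed.

Lemma two_frame (a c x v : V) : sqnorm a = sqnorm x -> sqnorm c = sqnorm v ->
  herm a c = 0 -> herm x v = 0 -> exists g, is_Sp g /\ g a = x /\ g c = v.
Proof.
move=> hax hcv hac hxv.
have [g1 [hg1 [g1a _]]] := refl_exists hax.
have hc1 : sqnorm (g1 c) = sqnorm v by rewrite hg1.2.2.
have [g2 [hg2 [g2c g2fix]]] := refl_exists hc1.
exists (g2 \o g1); split; [exact: Sp_comp|split] => /=; last by [].
rewrite g1a g2fix // hermBl (herm_sym x v) hxv qconj0 subr0.
by rewrite (herm_sym x (g1 c)) -g1a Sp_herm // hac qconj0.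
Qed.

End Sp.


Definition Lin (K : fieldType) (U V : lmodType K) (f : U -> V) (H : linear f) : {linear U -> V} :=
  HB.pack f (GRing.isLinear.Build K U V *:%R f H).
Lemma LinE (K : fieldType) (U V : lmodType K) (f : U -> V) (H : linear f) x : @Lin K U V f H x = f x.
Proof. by []. Qed.

Section Planes.
Variable R : realType.
Variable n : nat.
Local Notation V := 'M[R]_(n, 4).
Local Notation quat := (quat R).
Implicit Types (x y u v w z : V) (p q : quat) (c : R) (A : V -> V).
Variable W : {vspace V}.

Lemma Sp_linear A : is_Sp A -> linear A.
Proof. by move=> hA c u v; rewrite hA.1 SpZ. Qed.

Definition G (P : {vspace V}) := in_SpSp1_orbit W P.

Lemma sqnorm_one : sqnorm (1 : quat) = 1.
Proof.
rewrite /sqnorm big_ord1 sum4 !mxE /= !inordK //=; ring.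
Qed.

Lemma img_G A (hA : is_Sp A) : G (linfun (Lin (Sp_linear hA)) @: W)%VS.
Proof.
exists A, (1 : quat); split => //; split; first exact: sqnorm_one.
move=> v; split.
- by case/memv_imgP => w hw ->; exists w => //; rewrite lfunE rsc1.
- by case=> w hw ->; rewrite rsc1 -(LinE (Sp_linear hA)) -lfunE; apply: memv_img.
Qed.

Lemma img_mem A (hA : is_Sp A) w : w \in W -> A w \in (linfun (Lin (Sp_linear hA)) @: W)%VS.
Proof. by move=> hw; rewrite -(LinE (Sp_linear hA)) -lfunE; apply: memv_img. Qed.

Definition conn x y := exists (k : nat) (Ws : nat -> {vspace V}),
      (forall i, (i <= k)%N -> G (Ws i)) /\
      x \in Ws 0%N /\ y \in Ws k /\
      (forall i, (i < k)%N -> (0 < \dim (Ws i :&: Ws i.+1)%VS)%N).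

Lemma conn_plane P x y : G P -> x \in P -> y \in P -> conn x y.
Proof. by move=> hP hx hy; exists 0%N, (fun _ => P); split => //. Qed.

Lemma dim_cap_pos (P Q : {vspace V}) u : u != 0 -> u \in P -> u \in Q ->
  (0 < \dim (P :&: Q))%N.
Proof.
move=> hu hP hQ; have : (<[u]> <= P :&: Q)%VS.
  by rewrite -memvE memv_cap hP hQ.
by move/dimvS; rewrite dim_vline hu.
Qed.

Lemma conn_trans x y z : y != 0 -> conn x y -> conn y z -> conn x z.
Proof.
move=> hy [k1 [W1 [G1 [x1 [y1 I1]]]]] [k2 [W2 [G2 [y2 [z2 I2]]]]].
exists (k1 + k2.+1)%N, (fun i => if (i <= k1)%N then W1 i else W2 (i - k1.+1)%N).
split; [|split; [|split]].
- move=> i hi; case: ifP => h; first exact: G1.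
  by apply: G2; lia.
- by rewrite leq0n.
- have -> : (k1 + k2.+1 <= k1)%N = false by lia.
  by have -> : (k1 + k2.+1 - k1.+1)%N = k2 by lia.
- move=> i hi.
  have [hik|hik] := ltnP i k1.
    by rewrite (ltnW hik) ?hik; apply: I1.
  case: (eqVneq i k1) => [->|hne].
    rewrite leqnn subnn; exact: dim_cap_pos hy y1 y2.
  have -> : (i <= k1)%N = false by lia.
  have -> : (i.+1 - k1.+1)%N = (i - k1.+1).+1 by lia.
  by apply: I2; lia.
Qed.

Lemma conn_scale x y c d : conn x y -> conn (c *: x) (d *: y).
Proof.
move=> [k [Ws [h1 [h2 [h3 h4]]]]]; exists k, Ws; split => //.
by split; [exact: memvZ|split => //; exact: memvZ].
Qed.

End Planes.


Section Orth.
Variable R : realType.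
Variable n : nat.
Local Notation V := 'M[R]_(n, 4).
Local Notation quat := (quat R).
Implicit Types (x y u v w z : V) (p q : quat) (c : R).

Lemma sqnorm_pos x : x != 0 -> 0 < sqnorm x.
Proof.
move=> hx; rewrite lt_def sqnorm_ge0 andbT; apply/eqP => /sqnorm_eq0 h.
by rewrite h eqxx in hx.
Qed.

Lemma normalize x : x != 0 -> exists s, 0 < s /\ sqnorm (s^-1 *: x) = 1 /\ x = s *: (s^-1 *: x).
Proof.
move=> hx; have hp := sqnorm_pos hx.
exists (Num.sqrt (sqnorm x)); split; first by rewrite sqrtr_gt0.
have hs : Num.sqrt (sqnorm x) != 0 by rewrite gt_eqF // sqrtr_gt0.
split; last by rewrite scalerA mulfV // scale1r.
rewrite sqnormZ exprVn sqr_sqrtr ?mulVf // ?gt_eqF //; exact: ltW.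
Qed.

Lemma orth_exists : (3 <= n)%N -> forall p1 p2 : V,
  exists e, sqnorm e = 1 /\ herm p1 e = 0 /\ herm p2 e = 0.
Proof.
move=> hn p1 p2.
pose L (v : V) : 'M[R]_(1 + 1, 4) := col_mx (herm p1 v) (herm p2 v).
have hL : linear L.
  by move=> c u v; rewrite /L !hermDr !hermZr scale_col_mx add_col_mx.
pose f := linfun (Lin hL).
have hdim := limg_ker_dim f fullv.
have h1 : (\dim (f @: fullv) <= 8)%N.
  by have := dimvS (subvf (f @: fullv)); rewrite dimvf.
rewrite dimvf /= capfv in hdim.
have hk : lker f != 0%VS.
  rewrite -dimv_eq0; apply/eqP => h0; have h0n : \dim (lker f) = 0%N := h0.
  rewrite h0n in hdim; change (dim V) with (n * 4)%N in hdim.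
  rewrite add0n in hdim; rewrite hdim in h1; have h1n : (n * 4 <= 8)%N := h1; lia.
set e0 := vpick (lker f).
have he0 : e0 != 0 by rewrite vpick0.
have : f e0 == 0 by rewrite -memv_ker memv_pick.
rewrite lfunE LinE /L col_mx_eq0 => /andP[/eqP h1e /eqP h2e].
have [s [hs [hse _]]] := normalize he0.
exists (s^-1 *: e0); split => //.
by rewrite !hermZr h1e h2e !scaler0.
Qed.

End Orth.


Section Core.
Variable R : realType.
Variable n : nat.
Local Notation V := 'M[R]_(n, 4).
Local Notation quat := (quat R).
Implicit Types (x y u v w z : V) (p q : quat) (c : R).
Variable W : {vspace V}.
Variables a b : V.
Hypothesis ha : a \in W.
Hypothesis hb : b \in W.
Hypothesis a1 : sqnorm a = 1.
Hypothesis b1 : sqnorm b = 1.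
Hypothesis hab : qRe (herm a b) = 0.

Local Notation tau := (herm a b).
Local Notation t2 := (qn (herm a b)).
Let c := b - rsc a tau.

Lemma hac : herm a c = 0.
Proof. by rewrite /c hermBr herm_rscr herm_self a1 qalgMl scale1r subrr. Qed.

Lemma hcc : sqnorm c = 1 - t2.
Proof.
rewrite /c sqnormB b1 sqnorm_rsc a1 herm_rscr (herm_sym a b) qReC qmulc qReA; ring.
Qed.

Lemma adj x v : sqnorm x = 1 -> sqnorm v = 1 - t2 -> herm x v = 0 ->
  exists P, G W P /\ x \in P /\ forall al be : R, rsc x (al%:A + be *: tau) + be *: v \in P.
Proof.
move=> x1 hv hxv.
have [g [hg [ga gc]]] := two_frame (etrans a1 (esym x1)) (etrans hcc (esym hv)) hac hxv.
exists (linfun (Lin (Sp_linear hg)) @: W)%VS; split; first exact: img_G.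
split; first by rewrite -ga; apply: img_mem.
move=> al be.
have -> : rsc x (al%:A + be *: tau) + be *: v = g (al *: a + be *: b).
  have gb : g b = rsc x tau + v.
    have e : b = c + rsc a tau by rewrite /c subrK.
    by rewrite {1}e hg.1 hg.2.1 ga gc addrC.
  rewrite hg.1 (SpZ _ _ hg) (SpZ _ _ hg) gb ga rscDq rscA rscZq scalerDr; by rewrite addrA addrAC.
by apply: img_mem; rewrite memvD // memvZ.
Qed.


Ltac qsimp := rewrite ?(qmulE, qcD, qcN, qcB, qcZ, qcA0, qcA1, qcA2, qcA3, qm0, qm1, qm2, qm3) ?qoneE ?(qone0, qone1, qone2, qone3, qcD, qcN, qcB, qcZ, qc0).

Lemma tau0 : qc tau 0 = 0.
Proof. exact: hab. Qed.

Lemma qn_lin (al be : R) : qn (al%:A + be *: tau) = al ^+ 2 + be ^+ 2 * t2.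
Proof.
rewrite /qn; qsimp; rewrite tau0; ring.
Qed.

Lemma herm_selfA x : sqnorm x = 1 -> herm x x = 1.
Proof. by move=> h; rewrite herm_self h scale1r. Qed.

Lemma step_unit x z e3 (rho : R) :
  sqnorm x = 1 -> sqnorm z = 1 -> herm x z = rho%:A -> 0 < rho -> t2 <= rho ^+ 2 ->
  sqnorm e3 = 1 -> herm x e3 = 0 -> herm z e3 = 0 -> conn W x z.
Proof.
move=> x1 z1 hxz hr ht e31 hxe hze.
set d := z - rho *: x.
have hxd : herm x d = 0.
  by rewrite /d hermBr hermZr hxz herm_selfA // subrr.
have hzx : herm z x = rho%:A by rewrite herm_sym hxz qconjA.
have hdd : sqnorm d = 1 - rho ^+ 2.
  rewrite /d sqnormB z1 sqnormZ x1 hermZr hzx qReZ qReA; ring.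
have hde : herm d e3 = 0.
  by rewrite /d hermBl hermZl hze hxe scaler0 subrr.
set C := Num.sqrt (rho ^+ 2 - t2).
have hC : C ^+ 2 = rho ^+ 2 - t2 by rewrite sqr_sqrtr // subr_ge0.
set v := d + C *: e3.
have hxv : herm x v = 0 by rewrite /v hermDr hermZr hxd hxe scaler0 addr0.
have hvv : sqnorm v = 1 - t2.
  rewrite /v sqnormD hdd sqnormZ e31 hermZr hde scaler0 qRe0 hC; ring.
have [P1 [GP1 [xP1 uP1]]] := adj x1 hvv hxv.
set u := rsc x (rho%:A + 1 *: tau) + 1 *: v.
set h' : quat := 1%:A + rho *: tau.
have hrn : rho != 0 by rewrite gt_eqF.
set v' := rho^-1 *: (u - rsc z h').
have hu : u = rsc z h' + rho *: v'.
  by rewrite /v' scalerA mulfV // scale1r addrC subrK.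
have hzd : herm z d = (1 - rho ^+ 2)%:A.
  rewrite /d hermBr hermZr hzx herm_selfA //.
  apply: qext; qsimp; ring.
have hzu : herm z u = h'.
  rewrite /u /h' hermDr herm_rscr hzx hermZr /v hermDr hermZr hze hzd scaler0 addr0.
  apply: qext; qsimp; ring.
have hzv2 : herm z v' = 0.
  by rewrite /v' hermZr hermBr herm_rscr hzu herm_selfA // mul1r subrr scaler0.
have huu : sqnorm u = rho ^+ 2 + 1.
  rewrite /u !scale1r sqnormD sqnorm_rsc x1 hvv herm_rscl hxv mulr0 qRe0.
  have := qn_lin rho 1; rewrite scale1r => ->; ring.
have hvv2 : sqnorm v' = 1 - t2.
  rewrite /v' sqnormZ sqnormB huu sqnorm_rsc z1 herm_rscr (herm_sym z u) hzu qcmul qReA.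
  by rewrite /h' qn_lin; field.
have [P2 [GP2 [zP2 uP2]]] := adj z1 hvv2 hzv2.
have uP1' : u \in P1 by apply: uP1.
have uP2' : u \in P2 by rewrite hu; apply: uP2.
have hu0 : u != 0.
  apply/eqP => hu0; have := hu0; move/(congr1 (fun w => sqnorm w)).
  rewrite huu; have : 0 < rho ^+ 2 by rewrite exprn_gt0.
  rewrite /sqnorm big1 ?big1 //; first lra.
  by move=> i _; rewrite big1 // => j _; rewrite mxE expr0n.
apply: (conn_trans hu0); [exact: conn_plane GP1 xP1 uP1'|exact: conn_plane GP2 uP2' zP2].
Qed.


Lemma sqnorm0 : sqnorm (0 : V) = 0.
Proof. by rewrite sqnorm_herm herm0l qRe0. Qed.

Lemma step_gen y y' e3 (D N N' : R) :
  herm y y' = D%:A -> sqnorm y = N -> sqnorm y' = N' -> 0 < D ->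
  t2 * (N * N') <= D ^+ 2 -> sqnorm e3 = 1 -> herm y e3 = 0 -> herm y' e3 = 0 ->
  y != 0 -> y' != 0 -> conn W y y'.
Proof.
move=> hyy hN hN' hD ht e31 hye hy'e hy0 hy'0.
have [s [hs [hx ex]]] := normalize hy0.
have [s' [hs' [hz ez]]] := normalize hy'0.
set x := s^-1 *: y in hx ex; set z := s'^-1 *: y' in hz ez.
have hsN : N = s ^+ 2.
  move: hx; rewrite sqnormZ hN exprVn => h.
  have hs0 : s ^+ 2 != 0 by rewrite expf_neq0 // gt_eqF.
  by rewrite -[N]mul1r -(mulfV hs0) -mulrA h mulr1.
have hsN' : N' = s' ^+ 2.
  move: hz; rewrite sqnormZ hN' exprVn => h.
  have hs0 : s' ^+ 2 != 0 by rewrite expf_neq0 // gt_eqF.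
  by rewrite -[N']mul1r -(mulfV hs0) -mulrA h mulr1.
set rho := s^-1 * s'^-1 * D.
have hxz : herm x z = rho%:A by rewrite /x /z hermZl hermZr hyy !scalerA /rho mulrC.
have hr : 0 < rho by rewrite /rho !mulr_gt0 // invr_gt0.
have hrt : t2 <= rho ^+ 2.
  have hP : 0 < s ^+ 2 * s' ^+ 2 by rewrite mulr_gt0 // exprn_gt0.
  have e : rho ^+ 2 * (s ^+ 2 * s' ^+ 2) = D ^+ 2.
    by rewrite /rho; field; rewrite !gt_eqF.
  rewrite -(ler_pM2r hP) e -hsN -hsN'; exact: ht.
have hxe : herm x e3 = 0 by rewrite /x hermZl hye scaler0.
have hze : herm z e3 = 0 by rewrite /z hermZl hy'e scaler0.
have := step_unit hx hz hxz hr hrt e31 hxe hze.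
by move/(conn_scale s s'); rewrite -ex -ez.
Qed.

Hypothesis ht1 : t2 < 1.

Lemma conn_path x e e3 : sqnorm x = 1 -> sqnorm e = 1 -> herm x e = 0 ->
  sqnorm e3 = 1 -> herm x e3 = 0 -> herm e e3 = 0 -> conn W x e.
Proof.
move=> x1 e1 hxe e31 hx3 he3.
have t0 : 0 <= t2 by exact: qn_ge0.
have [m [hm4 hm]] : exists m : nat, (4 <= m)%N /\ 16 <= (1 - t2) * m%:R.
  have hq : 0 <= 16 / (1 - t2) by rewrite divr_ge0 // subr_ge0 ltW.
  have hB := archi_boundP hq.
  exists (Num.Def.archi_bound (16 / (1 - t2)) + 4)%N; split; first by rewrite leq_addl.
  rewrite natrD.
  have h1 : 16 / (1 - t2) * (1 - t2) = 16 by field; rewrite subr_eq0 gt_eqF.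
  have h0 : 0 < 1 - t2 by rewrite subr_gt0.
  set B := (Num.Def.archi_bound (16 / (1 - t2)))%:R in hB *.
  nra.
have hex : herm e x = 0 by rewrite herm_sym hxe qconj0.
have H2 : forall p q p' q' : R,
    herm (p *: x + q *: e) (p' *: x + q' *: e) = (p * p' + q * q')%:A.
  move=> p q p' q'; rewrite !hermDl !hermDr !hermZl !hermZr !herm_selfA // hxe hex.
  apply: qext; qsimp; ring.
have N2 : forall p q : R, sqnorm (p *: x + q *: e) = p ^+ 2 + q ^+ 2.
  by move=> p q; rewrite sqnorm_herm H2 qReA; ring.
pose y (k : nat) := (m - k)%:R *: x + k%:R *: e.
have hstep : forall k, (k < m)%N -> conn W (y k) (y k.+1).
  move=> k hk.
  have hM : (m - k)%:R = m%:R - k%:R :> R by rewrite natrB // ltnW.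
  have hM' : (m - k.+1)%:R = m%:R - k%:R - 1 :> R.
    by rewrite natrB // -addn1 natrD opprD addrA.
  have hK : k.+1%:R = k%:R + 1 :> R by rewrite -addn1 natrD.
  have hkm : k%:R + 1 <= m%:R :> R by rewrite -hK ler_nat.
  have hm4' : 4 <= m%:R :> R by rewrite (ler_nat R 4 m).
  have hk0 : 0 <= k%:R :> R by [].
  rewrite /y hM hM' hK.
  set M := m%:R in hkm hm4' hm *; set K := k%:R in hkm hk0 *.
  set D := (M - K) * (M - K - 1) + K * (K + 1).
  have hD : M ^+ 2 / 4 <= D.
    have eD : D = M ^+ 2 / 4 + M * (M - 4) / 4 + (M - 2 * K) ^+ 2 / 2 + 2 * K.
      by rewrite /D; field.
    have g1 : 0 <= M * (M - 4) by apply: mulr_ge0; lra.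
    have g2 : 0 <= (M - 2 * K) ^+ 2 by apply: sqr_ge0.
    rewrite eD; lra.
  have hDp : 0 < D by nra.
  apply: (@step_gen _ _ e3 D ((M - K) ^+ 2 + K ^+ 2) ((M - K - 1) ^+ 2 + (K + 1) ^+ 2)).
  - by rewrite H2.
  - exact: N2.
  - exact: N2.
  - exact: hDp.
  - have hL : ((M - K) ^+ 2 + K ^+ 2) * ((M - K - 1) ^+ 2 + (K + 1) ^+ 2) = D ^+ 2 + M ^+ 2.
      by rewrite /D; ring.
    rewrite hL.
    have h1 : M ^+ 2 <= 4 * M * D by nra.
    have h2 : 16 * D <= (1 - t2) * M * D by nra.
    have h3 : 4 * M * D <= (1 - t2) * D ^+ 2 by nra.
    nra.
  - exact: e31.
  - by rewrite hermDl !hermZl hx3 he3 !scaler0 addr0.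
  - by rewrite hermDl !hermZl hx3 he3 !scaler0 addr0.
  - apply/eqP => h0; have := N2 (M - K) K; rewrite h0 sqnorm0; nra.
  - apply/eqP => h0; have := N2 (M - K - 1) (K + 1); rewrite h0 sqnorm0; nra.
have hind : forall k, (k < m)%N -> conn W (y 0%N) (y k.+1).
  elim => [|k IH] hk; first exact: hstep.
  apply: (conn_trans (y := y k.+1)); [|exact: IH (ltnW hk)|exact: hstep].
  apply/eqP => h0; have := N2 (m - k.+1)%:R k.+1%:R.
  rewrite -/(y k.+1) h0 sqnorm0.
  have : 0 < k.+1%:R :> R by rewrite ltr0n.
  have : 0 <= (m - k.+1)%:R :> R by [].
  nra.
have hm0 : (0 < m)%N by lia.
have := hind m.-1; rewrite prednK // => /(_ (leqnn _)).
have hmR : m%:R != 0 :> R by rewrite pnatr_eq0 -lt0n.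
move/(conn_scale (m%:R^-1) (m%:R^-1)).
rewrite /y subn0 subnn !mulr0n !scale0r addr0 add0r !scalerA mulVf // !scale1r.
by [].
Qed.

End Core.


Theorem proposition11p9 (R : realType) (n : nat) (W : {vspace 'M[R]_(n, 4)}) :
  (3 <= n)%N -> real_plane W -> ~ in_quat_line W ->
  transitivity_property (fun W' => in_SpSp1_orbit W W').
Proof.
move=> hn hW hnq.
have [v1 [v2 [hv1 [hv2 [hfr hsp]]]]] : exists v1 v2, v1 \in W /\ v2 \in W /\
    free [:: v1; v2] /\ (<<[:: v1; v2]>> = W)%VS.
  have hmem : forall v, v \in tval (vbasis W) -> v \in W by move=> v hv; apply: vbasis_mem.
  have hb := vbasisP W.
  have hsz : size (vbasis W) = 2%N by rewrite size_tuple hW.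
  move: hmem hb hsz; move: (tval (vbasis W)) => s.
  case: s => [|w1 [|w2 [|? ?]]] //= hmem /andP[/eqP hsp hfr] _.
  exists w1, w2; split; first by apply: hmem; rewrite inE eqxx.
  split; first by apply: hmem; rewrite !inE eqxx orbT.
  by [].
move: hfr; rewrite free_cons seq1_free span_seq1 => /andP[hv1n hv20].
have [s2 [hs2 [ha1 ev2]]] := normalize hv20.
set a := s2^-1 *: v2 in ha1 ev2.
set k := qRe (herm a v1).
set b' := v1 - k *: a.
have hb'0 : b' != 0.
  apply/eqP => h; move: hv1n; rewrite (_ : v1 = (k * s2^-1) *: v2).
    by rewrite memvZ // memv_line.
  by rewrite -scalerA -/a; apply/eqP; rewrite -subr_eq0 -/b' h.
have [s1 [hs1 [hb1 ev1]]] := normalize hb'0.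
set b := s1^-1 *: b' in hb1 ev1.
have ha : a \in W by rewrite memvZ.
have hb : b \in W by rewrite memvZ // memvB // memvZ.
have hab : qRe (herm a b) = 0.
  rewrite /b /b' hermZr hermBr hermZr herm_selfA // qReZ qReB qReZ.
  rewrite (_ : qRe 1 = 1); last by rewrite /qRe qoneE qone0.
  rewrite -/k; ring.
have ht1 : qn (herm a b) < 1.
  rewrite ltNge; apply/negP => ht.
  have hc := hcc ha1 hb1.
  have hc0 : b - rsc a (herm a b) = 0.
    apply: sqnorm_eq0; apply/eqP; rewrite eq_le sqnorm_ge0 andbT hc; lra.
  apply: hnq; exists a; split.
    by apply/eqP => a0; move: ha1; rewrite a0 sqnorm0 => /eqP; rewrite eq_sym oner_eq0.
  move=> w; rewrite -hsp span_cons span_seq1 => /memv_addP [w1 hw1 [w2 hw2 ->]].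
  case/vlineP: hw1 => k1 ->; case/vlineP: hw2 => k2 ->.
  have eb : b = rsc a (herm a b) by apply/eqP; rewrite -subr_eq0 hc0.
  exists ((k1 * s1) *: herm a b + (k1 * k + k2 * s2)%:A).
  rewrite rscDq rscZq rscA -eb scalerDl.
  have ev1' : v1 = s1 *: b + k *: a by rewrite -ev1 /b' subrK.
  by rewrite ev1' ev2 scalerDr !scalerA addrA.
have plane : forall p, sqnorm p = 1 -> exists P, G W P /\ p \in P.
  move=> p p1; have [e [e1 [hpe _]]] := orth_exists hn p p.
  set v := Num.sqrt (1 - qn (herm a b)) *: e.
  have hv : sqnorm v = 1 - qn (herm a b).
    by rewrite /v sqnormZ e1 mulr1 sqr_sqrtr // subr_ge0 ltW.
  have hpv : herm p v = 0 by rewrite /v hermZr hpe scaler0.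
  have [P [GP [pP _]]] := adj ha hb ha1 hb1 p1 hv hpv.
  by exists P.
have planev : forall p, exists P, G W P /\ p \in P.
  move=> p; have [->|hp] := eqVneq p 0.
    by have [P [GP _]] := plane a ha1; exists P; split => //; rewrite mem0v.
  have [s [hs [hp1 ep]]] := normalize hp.
  have [P [GP pP]] := plane _ hp1; exists P; split => //.
  by rewrite ep memvZ.
move=> x y; change (conn W x y).
have [->|hx] := eqVneq x 0.
  by have [P [GP yP]] := planev y; apply: (conn_plane GP) => //; rewrite mem0v.
have [->|hy] := eqVneq y 0.
  by have [P [GP xP]] := planev x; apply: (conn_plane GP) => //; rewrite mem0v.
have [sx [hsx [hx1 ex]]] := normalize hx.
have [sy [hsy [hy1 ey]]] := normalize hy.
set x' := sx^-1 *: x in hx1 ex; set y' := sy^-1 *: y in hy1 ey.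
have [e [e1 [hxe hye]]] := orth_exists hn x' y'.
have [e3 [e31 [hx3 he3]]] := orth_exists hn x' e.
have [e4 [e41 [he4 hy4]]] := orth_exists hn e y'.
have c1 := conn_path ha hb ha1 hb1 hab ht1 hx1 e1 hxe e31 hx3 he3.
have hey : herm e y' = 0 by rewrite herm_sym hye qconj0.
have c2 := conn_path ha hb ha1 hb1 hab ht1 e1 hy1 hey e41 he4 hy4.
have he0 : e != 0.
  by apply/eqP => e0; move: e1; rewrite e0 sqnorm0 => /eqP; rewrite eq_sym oner_eq0.
have := conn_trans he0 c1 c2.
by move/(conn_scale sx sy); rewrite -ex -ey.
Qed.
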